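(* Let $X$ be a connected, locally connected topological space and let $f\colon X\to[0,1]$ be a continuous surjection. Then $f$ is a quotient map, i.e. a subset $G\subseteq[0,1]$ is open in $[0,1]$ if and only if $f^{-1}(G)$ is open in $X$.
   Context: $[0,1]$ carries its usual Euclidean topology. *)

(* Defs.v *)
From HB Require Import structures.
From mathcomp Require Import all_boot all_order all_algebra.
From mathcomp Require Import all_classical all_reals all_analysis.
Import numFieldNormedType.Exports.
Local Open Scope classical_set_scope.
Local Open Scope ring_scope.

Definition locally_connected (T : topologicalType) : Prop :=
  forall (x : T) (U : set T), open U -> U x ->
    exists V : set T, [/\ open V, connected V, V x & V `<=` U].

Definition open_in_subspace (T : topologicalType) (A G : set T) : Prop :=
  exists U : set T, open U /\ G = U `&` A.

(* Main.v *)
Require Import Defs.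
From HB Require Import structures.
From mathcomp Require Import all_boot all_order all_algebra.
From mathcomp Require Import all_classical all_reals all_analysis.
Import numFieldNormedType.Exports.
Import Order.TTheory GRing.Theory Num.Theory.
Local Open Scope classical_set_scope.
Local Open Scope ring_scope.

Lemma open_union_witness (T : topologicalType) (P : set T -> Prop) :
  open [set z | exists V, [/\ open V, P V & V z]].
Proof.
have H : forall z, [set z | exists V, [/\ open V, P V & V z]] z ->
  nbhs z [set z | exists V, [/\ open V, P V & V z]].
  move=> z [V [oV PV Vz]].
have : nbhs z V by apply: open_nbhs_nbhs; split.
by apply: filterS => w Vw; exists V.
move: H; set B := [set z | _]; rewrite openE; exact.
Qed.

Lemma right_part (R : realType) (X : topologicalType) (f : X -> R) (G : set R)
  (y : R) (x0 x1 : X) : G y ->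
  connected [set: X] -> locally_connected X -> continuous f ->
  open (f @^-1` G) -> f x0 = y -> y < f x1 ->
  exists2 t, y < t & forall z, y <= z < t -> G z.
Proof.
move=> Gy cX lcX cf oG fx0 yx1.
apply: contrapT => Hno.
pose B := [set z | exists V, [/\ open V, V `<=` [set w | f w <= y] & V z]].
have oB : open B := @open_union_witness X (fun V => V `<=` [set w | f w <= y]).
have Hcov : forall x, ~ (y < f x) -> B x.
  move=> x /negP; rewrite -leNgt le_eqVlt => /orP[/eqP fx|fx]; last first.
    exists (f @^-1` [set w | w < y]); split => //.
    - by apply: open_comp; [move=> ? _; exact: cf | exact: open_lt].
    - by move=> w /= /ltW.
  have [V [oV cV Vx VG]] := lcX x _ oG (eq_ind_r G Gy fx : (f @^-1` G) x).
  exists V; split => // w Vw /=; rewrite leNgt; apply/negP => yw.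
  apply: Hno; exists (f w) => // z /andP[yz zw].
  have cfV : connected (f @` V).
    apply: connected_continuous_connected cV _.
    exact: continuous_subspaceT.
  have [u Vu fu] : (f @` V) z.
    have hI := (connected_intervalP _).1 cfV.
    apply: (hI y (f w)).
    - by exists x.
    - by exists w.
    by rewrite yz ltW.
  by rewrite -fu; apply: VG.
have BT : B = [set: X].
  apply: cX.
  - by exists x0; apply: Hcov; rewrite fx0 ltxx.
  - by exists B => //; rewrite setTI.
  - exists B; last by rewrite setTI.
    have -> : B = ~` (f @^-1` [set w | y < w]).
      apply/seteqP; split => z /=.
        move=> [V [_ Vle Vz]]; have := Vle _ Vz => /=; rewrite leNgt => /negP//.
      exact: Hcov.
    by rewrite -openC setCK; apply: open_comp; [move=> ? _; exact: cf | exact: open_gt].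
have : B x1 by rewrite BT.
move=> [V [_ Vle Vx]]; have := Vle _ Vx => /=; rewrite leNgt yx1 //.
Qed.

Theorem mainTheorem2 (R : realType) (X : topologicalType) (f : X -> R) :
  connected [set: X] -> locally_connected X ->
  continuous f -> range f = `[0, 1]%classic :> set R ->
  forall G : set R, G `<=` `[0, 1]%classic ->
    (@open_in_subspace R `[0, 1]%classic G <-> open (f @^-1` G)).
Proof.
move=> cX lcX cf rf G G01.
have f01 : forall x, `[0, 1]%classic (f x) by move=> x; rewrite -rf; exists x.
split.
  move=> [U [oU ->]].
  have -> : f @^-1` (U `&` `[0, 1]%classic) = f @^-1` U.
    by apply/seteqP; split => x /=; [case|split=> //; exact: f01].
  by apply: open_comp => // ? _; exact: cf.
move=> oG.
have [x1 fx1] : exists x, f x = 1.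
  have : `[0, 1]%classic (1 : R) by rewrite /= in_itv /= ler01 lexx.
  by rewrite -rf => -[x _ fx]; exists x.
have [xz fxz] : exists x, f x = 0.
  have : `[0, 1]%classic (0 : R) by rewrite /= in_itv /= ler01 lexx.
  by rewrite -rf => -[x _ fx]; exists x.
pose U : set R := [set z : R | exists V : set R, [/\ open V, V `&` `[0, 1]%classic `<=` G & V z]].
exists U; split; first exact: (@open_union_witness R (fun V => V `&` `[0, 1]%classic `<=` G)).
apply/seteqP; split => y; last by move=> [[V [_ VG Vy]] y01]; apply: VG.
move=> Gy; have y01 := G01 _ Gy; split => //.
move: (y01); rewrite /= in_itv /= => /andP[y0 y1].
have [x0 fx0] : exists x, f x = y by move: (y01); rewrite -rf => -[x _ fx]; exists x.
have [t yt Ht] : exists2 t, y < t & forall z, y <= z < t -> z <= 1 -> G z.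
  have [y1'|y1'] := ltP y 1.
    have [t yt Ht] := @right_part _ _ f G y x0 x1 Gy cX lcX cf oG fx0 (eq_ind_r (fun u => y < u) y1' fx1).
    by exists t => // z /Ht.
  exists (y + 1); first by rewrite ltrDl.
  move=> z /andP[yz _] z1.
  by have -> : z = y by apply/eqP; rewrite eq_le yz andbT (le_trans z1).
have [s sy Hs] : exists2 s, s < y & forall z, s < z <= y -> 0 <= z -> G z.
  have [y0'|y0'] := ltP 0 y.
    pose G' : set R := [set z | G (- z)].
    have oG' : open ((fun x => - f x) @^-1` G').
      suff -> : (fun x => - f x) @^-1` G' = f @^-1` G by [].
      by apply/seteqP; split => x; rewrite /preimage /G' /= opprK.
    have cf' : continuous (fun x => - f x) by move=> x; exact: (continuousN (cf x)).
    have G'y : G' (- y) by rewrite /G' /= opprK.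
    have fx0' : - f x0 = - y by rewrite fx0.
    have fxz' : - y < - f xz by rewrite fxz oppr0 ltrNl oppr0.
    have [t' yt' Ht'] := @right_part _ _ (fun x => - f x) G' (- y) x0 xz
      G'y cX lcX cf' oG' fx0' fxz'.
    exists (- t'); first by rewrite ltrNl.
    move=> z /andP[sz zy] _; rewrite -[z]opprK; apply: Ht'.
    by rewrite lerN2 zy /= ltrNl.
  exists (y - 1); first by rewrite gtrDl ltrN10.
  move=> z /andP[_ zy] z0.
  by have -> : z = y by apply/eqP; rewrite eq_le zy (le_trans y0').
exists `]s, t[%classic; split.
- exact: itv_open.
- move=> z [] /=; rewrite !in_itv /= => /andP[sz zt] /[dup] z01 /andP[z0 z1].
  have [yz|zy] := leP y z.
    by apply: Ht => //; rewrite yz zt.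
  by apply: Hs => //; rewrite sz ltW.
- by rewrite /= in_itv /= sy yt.
Qed.
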